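(* Let $(X,\|\cdot\|)$ be a convex normed space and let $S\subset X$ be a subset such that every sequence in $S$ has a subsequence converging in $X$. Then $S$ is a uniformly convex subset of $X$.
   Context: A normed space $X$ is convex if for all $u,v\in X$ with $u\ne v$ and $\|u\|=\|v\|=1$ we have $\|u+v\|<2$. A subset $S\subset X$ is called uniformly convex if for every $\varepsilon>0$ there exists $\delta\in(0,1)$ such that for all $u,v\in S$ with $\|u\|=\|v\|=1$ and $\|u-v\|\ge\varepsilon$ we have $\|u+v\|\le 2-\delta$ (in particular, a subset containing no unit vectors is uniformly convex). *)

(* Defs.v *)
From HB Require Import structures.
From mathcomp Require Import all_boot all_order all_algebra.
From mathcomp Require Import all_classical all_reals all_analysis.
Set Implicit Arguments. Unset Strict Implicit. Unset Printing Implicit Defensive.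
Import Order.TTheory GRing.Theory Num.Theory.
Local Open Scope classical_set_scope.
Local Open Scope ring_scope.

Definition convex_space (R : realType) (X : normedModType R) : Prop :=
  forall u v : X, u <> v -> `|u| = 1 -> `|v| = 1 -> `|u + v| < 2.

Definition uniformly_convex_subset (R : realType) (X : normedModType R)
  (S : set X) : Prop :=
  forall eps : R, 0 < eps ->
    exists delta : R, 0 < delta /\ delta < 1 /\
      forall u v : X, S u -> S v -> `|u| = 1 -> `|v| = 1 ->
        eps <= `|u - v| -> `|u + v| <= 2 - delta.

Definition rel_seq_compact (R : realType) (X : normedModType R)
  (S : set X) : Prop :=
  forall x : nat -> X, (forall n, S (x n)) ->
    exists phi : nat -> nat,
      (forall m n, (m < n)%N -> (phi m < phi n)%N) /\
      exists l : X, (x \o phi) @ \oo --> l.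

(* Main.v *)
Require Import Defs.
From HB Require Import structures.
From mathcomp Require Import all_boot all_order all_algebra.
From mathcomp Require Import all_classical all_reals all_analysis.
From mathcomp Require Import lra.
Import Order.TTheory GRing.Theory Num.Theory numFieldNormedType.Exports.
Local Open Scope classical_set_scope.
Local Open Scope ring_scope.

Lemma incr_ge {phi : nat -> nat} :
  (forall m n, (m < n)%N -> (phi m < phi n)%N) -> forall n, (n <= phi n)%N.
Proof.
move=> H; elim=> [//|n IH].
exact: (@leq_ltn_trans (phi n) n (phi n.+1) IH (H _ _ (ltnSn n))).
Qed.

Lemma incr_cvg {phi : nat -> nat} :
  (forall m n, (m < n)%N -> (phi m < phi n)%N) -> phi @ \oo --> \oo.
Proof.
move=> H P [N _ PN]; exists N => // n /= Nn; apply: PN.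
change (N <= phi n)%N; exact: (leq_trans Nn (incr_ge H n)).
Qed.

Theorem mainTheorem6 (R : realType) (X : normedModType R) (S : set X) :
  convex_space X -> rel_seq_compact S -> uniformly_convex_subset S.
Proof.
move=> hconv hcpt eps eps0.
apply: contrapT => H.
pose dl (n : nat) : R := (n.+2%:R)^-1.
have dl0 n : 0 < dl n by rewrite /dl invr_gt0 ltr0n.
have dl1 n : dl n < 1 by rewrite /dl invf_lt1 ?ltr0n // ltr1n.
have P n : exists p : X * X, S p.1 /\ S p.2 /\ `|p.1| = 1 /\ `|p.2| = 1 /\
    eps <= `|p.1 - p.2| /\ 2 - dl n < `|p.1 + p.2|.
  apply: contrapT => Hn; apply: H; exists (dl n); split; first exact: dl0.
  split; first exact: dl1.
  move=> u v Su Sv nu nv e; rewrite leNgt; apply/negP => lt.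
  by apply: Hn; exists (u, v); do !split.
have [p Hp] := choice P.
pose x n := (p n).1.
pose y n := (p n).2.
have [phi [phiI [a cva]]] := hcpt (x \o id) (fun n => proj1 (Hp n)).
have [psi [psiI [b cvb]]] := hcpt (y \o phi) (fun n => proj1 (proj2 (Hp (phi n)))).
pose nk k := phi (psi k).
have nkI : forall m n, (m < n)%N -> (nk m < nk n)%N.
  by move=> m n mn; apply: phiI; apply: psiI.
pose s := x \o nk.
pose t := y \o nk.
have cvs : s @ \oo --> a.
  have -> : s = (x \o phi) \o psi by [].
  exact: cvg_comp (incr_cvg psiI) cva.
have cvt : t @ \oo --> b by [].
have ns k : `|s k| = 1 by rewrite /s /x /=; case: (Hp (nk k)) => [_ [_ [h _]]].
have nt k : `|t k| = 1 by rewrite /t /y /=; case: (Hp (nk k)) => [_ [_ [_ [h _]]]].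
have ed k : eps <= `|s k - t k| by rewrite /s /t /x /y /=; case: (Hp (nk k)) => [_ [_ [_ [_ [h _]]]]].
have sd k : 2 - dl (nk k) < `|s k + t k| by rewrite /s /t /x /y /=; case: (Hp (nk k)) => [_ [_ [_ [_ [_ h]]]]].
have na : `|a| = 1.
  have h1 : `|s k| @[k --> \oo] --> (`|a| : R) by apply: cvg_norm.
  have h2 : `|s k| @[k --> \oo] --> (1 : R).
    by rewrite (_ : (fun k => `|s k|) = fun _ => 1); [exact: cvg_cst | apply: funext].
  exact: (cvg_unique (@Rhausdorff R) h1 h2).
have nb : `|b| = 1.
  have h1 : `|t k| @[k --> \oo] --> (`|b| : R) by apply: cvg_norm.
  have h2 : `|t k| @[k --> \oo] --> (1 : R).
    by rewrite (_ : (fun k => `|t k|) = fun _ => 1); [exact: cvg_cst | apply: funext].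
  exact: (cvg_unique (@Rhausdorff R) h1 h2).
have ab : a <> b.
  move=> eab.
  have := (cvgrPdist_lt _ _).1 (cvgB cvs cvt) _ eps0.
  move=> [N _ HN]; have := HN N (leqnn N).
  by rewrite eab subrr sub0r normrN /= ltNge ed.
have := hconv a b ab na nb.
set d := 2 - `|a + b|.
rewrite -subr_gt0 -/d => d0.
have d20 : 0 < d / 2 by rewrite divr_gt0.
have := (cvgrPdist_lt _ _).1 (cvgD cvs cvt) _ d20.
move=> [N1 _ HN1].
have [N2 _ HN2] := nbhs_infty_ger (2 / d).
pose k := maxn N1 N2.
have := HN1 k (leq_maxl _ _).
have := HN2 k (leq_maxr _ _).
have := sd k.
have := incr_ge nkI k.
rewrite /=; set m := nk k.
move=> km hsd hk hdist.
have tri : `|s k + t k| <= `|a + b| + `|(a + b) - (s k + t k)|.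
  have e : s k + t k = (a + b) + - ((a + b) - (s k + t k)) by rewrite opprB addrCA subrr addr0.
  by rewrite {1}e; apply: le_trans (ler_normD _ _) _; rewrite normrN.
have kR : (k%:R : R) <= m.+2%:R by rewrite ler_nat; exact: (@leq_trans m k m.+2 km (leqW (leqnSn m))).
have m0 : (0 : R) < m.+2%:R by rewrite ltr0n.
have mm : (m.+2%:R : R) * dl m = 1 by rewrite /dl mulfV // gt_eqF.
have dval : d = 2 - `|a + b| by [].
have h1 : d / 2 < dl m.
  have hd : `|a + b| = 2 - d by rewrite dval opprB addrCA subrr addr0.
  rewrite hd in tri; lra.
have h2 : (m.+2%:R : R) * (d / 2) < 1.
  by rewrite -[X in _ < X]mm ltr_pM2l.
have h3 : 2 / d <= m.+2%:R by exact: le_trans hk kR.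
rewrite ler_pdivrMr // in h3.
rewrite mulrA in h2.
lra.
Qed.
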